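(* Let $p$ be a prime and $A,T$ countable $p$-groups with $A$ reduced. Then $\mathrm{Ext}(T,A)$ is a Polish group if and only if either $T^1=0$ or $A$ is bounded.
   Context: $T^1=\bigcap_{n\ge1}nT$ is the first Ulm subgroup; $A$ is reduced if it has no nonzero divisible subgroup, bounded if $nA=0$ for some $n\ge1$. $\mathrm{Ext}(T,A)=\mathsf Z(T,A)/\mathsf B(T,A)$ as a group with a Polish cover, where $\mathsf Z(T,A)$ is the Polish group (closed in $A^{T\times T}$, $A$ discrete) of functions $c:T\times T\to A$ with $c(x,0)=0$, $c(x,y)=c(y,x)$, $c(y,z)-c(x+y,z)+c(x,y+z)-c(x,y)=0$, and $\mathsf B(T,A)$ is the Polishable subgroup of coboundaries $c(x,y)=\phi(y)-\phi(x+y)+\phi(x)$ with $\phi(0)=0$. $\mathrm{Ext}(T,A)$ is a Polish group when $\mathsf B(T,A)$ is closed in $\mathsf Z(T,A)$. *)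

(* Defs.v *)
From Stdlib Require List.
From HB Require Import structures.
From mathcomp Require Import all_boot all_order all_algebra.
Set Implicit Arguments.
Unset Strict Implicit.
Unset Printing Implicit Defensive.
Import GRing.Theory.
Local Open Scope ring_scope.

Definition is_p_group (p : nat) (G : zmodType) : Prop :=
  forall x : G, exists n : nat, x *+ (p ^ n) = 0.

Definition is_subgroup (G : zmodType) (D : G -> Prop) : Prop :=
  D 0 /\ (forall x y, D x -> D y -> D (x - y)).

Definition is_divisible_subgroup (G : zmodType) (D : G -> Prop) : Prop :=
  is_subgroup D /\
  forall x n, D x -> (0 < n)%N -> exists2 y, D y & y *+ n = x.

Definition reduced (G : zmodType) : Prop :=
  forall D : G -> Prop, is_divisible_subgroup D -> forall x, D x -> x = 0.

Definition bounded (G : zmodType) : Prop :=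
  exists2 n : nat, (0 < n)%N & forall x : G, x *+ n = 0.

Definition ulm1 (G : zmodType) (x : G) : Prop :=
  forall n : nat, (0 < n)%N -> exists y : G, y *+ n = x.

Definition ulm1_trivial (G : zmodType) : Prop :=
  forall x : G, ulm1 x -> x = 0.

(* Z(T,A): symmetric normalized 2-cocycles T x T -> A. *)
Definition cocycle (T A : zmodType) (c : T -> T -> A) : Prop :=
  (forall x, c x 0 = 0) /\
  (forall x y, c x y = c y x) /\
  (forall x y z, c y z - c (x + y) z + c x (y + z) - c x y = 0).

Definition coboundary (T A : zmodType) (c : T -> T -> A) : Prop :=
  exists phi : T -> A, phi 0 = 0 /\
    forall x y, c x y = phi y - phi (x + y) + phi x.

(* Closure of a set S of functions T -> T -> A in the product topology on
   A^(T x T), A discrete: c is in the closure iff every basic open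
   neighbourhood of c (determined by a finite set F of coordinates)
   meets S. *)
Definition in_product_closure (T A : Type) (S : (T -> T -> A) -> Prop)
    (c : T -> T -> A) : Prop :=
  forall F : seq (T * T), exists2 b, S b &
    forall xy, Stdlib.Lists.List.In xy F -> c xy.1 xy.2 = b xy.1 xy.2.

(* Ext(T,A) = Z(T,A)/B(T,A) is a Polish group, i.e. B(T,A) is closed
   in Z(T,A) (equivalently in A^(T x T), since Z(T,A) is closed). *)
Definition Ext_is_Polish (T A : zmodType) : Prop :=
  forall c : T -> T -> A, cocycle c ->
    in_product_closure (@coboundary T A) c -> coboundary c.

(* Main.v *)
Require Import Defs.
From HB Require Import structures.
From mathcomp Require Import all_boot all_order all_algebra.
From mathcomp Require Import ssrAC.
From Stdlib Require Import ClassicalEpsilon Classical.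
From mathcomp Require Import zify.
Set Implicit Arguments.
Unset Strict Implicit.
Unset Printing Implicit Defensive.
Import GRing.Theory.
Local Open Scope ring_scope.

Section ExtGroup.
Variables (T A : zmodType).
Definition cocyc := {c : T -> T -> A | cocycle c}.
Definition ext (cc : cocyc) : Type := (T * A)%type.
Variable cc : cocyc.
HB.instance Definition _ := Choice.copy (ext cc) (T * A)%type.
Let c := sval cc.
Let hc : cocycle c := proj2_sig cc.
Definition ext_add (x y : ext cc) : ext cc := (x.1 + y.1, x.2 + y.2 + c x.1 y.1).
Definition ext_opp (x : ext cc) : ext cc := (- x.1, - x.2 - c x.1 (- x.1)).
Definition ext_zero : ext cc := (0, 0).
Lemma c0l x : c 0 x = 0.
Proof. by case: hc => h0 [hs _]; rewrite hs h0. Qed.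
Lemma cc_id x y z : c x y + c (x + y) z = c y z + c x (y + z).
Proof.
case: hc => _ [_ hcc]; have := hcc x y z.
move/eqP; rewrite subr_eq0 => /eqP <-.
by rewrite addrAC subrK.
Qed.
Lemma ext_addA : associative ext_add.
Proof.
move=> [x a] [y b] [z d]; rewrite /ext_add /=; congr pair; first by rewrite addrA.
by rewrite -!addrA; congr (_ + (_ + _)); rewrite [RHS]addrCA cc_id.
Qed.
Lemma ext_addC : commutative ext_add.
Proof. by move=> [x a] [y b]; rewrite /ext_add /=; case: hc => _ [hs _]; rewrite addrC [b + _]addrC hs. Qed.
Lemma ext_add0 : left_id ext_zero ext_add.
Proof. by move=> [x a]; rewrite /ext_add /= !add0r c0l addr0. Qed.
Lemma ext_addN : left_inverse ext_zero ext_opp ext_add.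
Proof.
move=> [x a]; rewrite /ext_add /ext_opp /=; case: hc => _ [hs _].
by rewrite addNr hs addrAC subrK addNr.
Qed.
HB.instance Definition _ := GRing.isZmodule.Build (ext cc) ext_addA ext_addC ext_add0 ext_addN.

Lemma extD (x y : ext cc) : x + y = (x.1 + y.1, x.2 + y.2 + c x.1 y.1).
Proof. by []. Qed.
Lemma ext0 : (0 : ext cc) = (0, 0).
Proof. by []. Qed.
Lemma extN (x : ext cc) : - x = (- x.1, - x.2 - c x.1 (- x.1)).
Proof. by []. Qed.
Lemma ext_fstD (x y : ext cc) : (x + y).1 = x.1 + y.1.
Proof. by []. Qed.
Lemma ext_fstB (x y : ext cc) : (x - y).1 = x.1 - y.1.
Proof. by []. Qed.
Lemma ext_fstMn (x : ext cc) n : (x *+ n).1 = x.1 *+ n.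
Proof. elim: n => [|n IH]; first by rewrite !mulr0n. by rewrite !mulrS ext_fstD IH. Qed.
Lemma ext_inj0D (a b : A) : ((0, a) : ext cc) + (0, b) = (0, a + b).
Proof. by rewrite extD /= addr0 c0l addr0. Qed.
Lemma ext_inj0Mn (a : A) n : ((0, a) : ext cc) *+ n = (0, a *+ n).
Proof. elim: n => [|n IH]; first by rewrite !mulr0n. by rewrite !mulrS IH ext_inj0D. Qed.
End ExtGroup.

Section SubgroupFacts.
Variables (G : zmodType) (D : G -> Prop) (HD : is_subgroup D).
Lemma sg0 : D 0. Proof. by case: HD. Qed.
Lemma sgB x y : D x -> D y -> D (x - y). Proof. by case: HD => _; apply. Qed.
Lemma sgN x : D x -> D (- x).
Proof. by move=> Dx; rewrite -sub0r; apply: sgB => //; apply: sg0. Qed.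
Lemma sgD x y : D x -> D y -> D (x + y).
Proof. by move=> Dx Dy; rewrite -[y]opprK; apply: sgB => //; apply: sgN. Qed.
Lemma sgMn x n : D x -> D (x *+ n).
Proof. move=> Dx; elim: n => [|n IH]; first by rewrite mulr0n; apply: sg0. by rewrite mulrS; apply: sgD. Qed.
End SubgroupFacts.

Definition htin (G : zmodType) (D : G -> Prop) (p : nat) (x : G) (j : nat) :=
  exists2 y, D y & y *+ p ^ j = x.

Notation lsub L := (is_subgroup (fun x => x \in L)).

Section HtFacts.
Variables (G : zmodType) (D : G -> Prop) (HD : is_subgroup D) (p : nat).
Lemma ht0 x : htin D p x 0 <-> D x.
Proof. by split=> [[y Dy <-]|Dx]; [rewrite expn0 mulr1n | exists x; rewrite ?expn0 ?mulr1n]. Qed.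
Lemma htz j : htin D p 0 j.
Proof. by exists 0; rewrite ?mul0rn //; apply: sg0 HD. Qed.
Lemma htD x y j : htin D p x j -> htin D p y j -> htin D p (x + y) j.
Proof. by move=> [a Da <-] [b Db <-]; exists (a + b); [apply: sgD | rewrite mulrnDl]. Qed.
Lemma htN x j : htin D p x j -> htin D p (- x) j.
Proof. by move=> [a Da <-]; exists (- a); [apply: sgN | rewrite mulNrn]. Qed.
Lemma htB x y j : htin D p x j -> htin D p y j -> htin D p (x - y) j.
Proof. by move=> hx hy; apply: htD => //; apply: htN. Qed.
Lemma htMn x n j : htin D p x j -> htin D p (x *+ n) j.
Proof. by move=> [a Da <-]; exists (a *+ n); [apply: sgMn | rewrite mulrnAC]. Qed.
Lemma htle x i j : htin D p x j -> (i <= j)%N -> htin D p x i.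
Proof.
move=> [a Da <-] le; exists (a *+ p ^ (j - i)); first by apply: sgMn.
by rewrite -mulrnA -expnD subnK.
Qed.
Lemma htD_in x j : htin D p x j -> D x.
Proof. by move=> [a Da <-]; apply: sgMn. Qed.
End HtFacts.

Lemma prime_inv p i : prime p -> (0 < i < p)%N -> exists i' q, (i * i' = q * p + 1)%N.
Proof.
move=> pP /andP [i0 ip]; case: (@egcdnP i p i0) => km kn Hb _.
have g1 : gcdn i p = 1%N.
  by apply/eqP; rewrite -/(coprime i p) coprime_sym prime_coprime // gtnNdvd.
by rewrite g1 in Hb; exists km, kn; rewrite mulnC Hb.
Qed.

Lemma max_exists (Q : nat -> Prop) B : Q 0%N -> (forall j, Q j -> (j <= B)%N) ->
  exists h, Q h /\ forall j, Q j -> (j <= h)%N.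
Proof.
elim: B => [|B IH] Q0 HB; first by exists 0%N; split => // j /HB.
case: (classic (Q B.+1)) => [QB|nQB]; first by exists B.+1; split.
apply: IH => // j Qj; have := HB j Qj; rewrite leq_eqVlt => /orP [/eqP e|]; last by rewrite ltnS.
by subst.
Qed.

Section Machine.
Variables (p : nat) (pP : prime p) (T E : zmodType) (pi : E -> T).
Hypothesis piB : forall x y, pi (x - y) = pi x - pi y.
Variables (U : T -> Prop) (V : E -> Prop).
Hypothesis Usub : is_subgroup U.
Hypothesis Vsub : is_subgroup V.
Hypothesis VU : forall e, V e -> U (pi e).
Variable P : nat -> Prop.

Lemma pi0 : pi 0 = 0. Proof. by have := piB 0 0; rewrite !subrr. Qed.
Lemma piN x : pi (- x) = - pi x. Proof. by rewrite -sub0r piB pi0 sub0r. Qed.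
Lemma piD x y : pi (x + y) = pi x + pi y. Proof. by rewrite -{1}[y]opprK piB piN opprK. Qed.
Lemma piMn x n : pi (x *+ n) = pi x *+ n.
Proof. elim: n => [|n IH]; first by rewrite !mulr0n pi0. by rewrite !mulrS piD IH. Qed.

Definition good (L : seq T) (s : T -> E) :=
  [/\ lsub L, (forall x, x \in L -> U x), (forall x, x \in L -> V (s x) /\ pi (s x) = x),
      (forall x y, x \in L -> y \in L -> s (x - y) = s x - s y) &
      (forall x j, x \in L -> P j -> htin U p x j -> htin V p (s x) j)].

Lemma good_s0 L s : good L s -> s 0 = 0.
Proof.
case=> Ls _ _ sB _; have L0 : (0 : T) \in L by case: Ls.
by rewrite -(subrr (0:T)) sB // subrr.
Qed.

Lemma lsub_in (L : seq T) x y : lsub L -> x \in L -> y \in L -> x + y \in L.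
Proof. by move=> Ls; apply: (sgD Ls). Qed.

Lemma t_in (L : seq T) (t : T) k : lsub L -> (0 < k < p)%N -> t *+ k \in L -> t *+ p \in L -> t \in L.
Proof.
move=> Ls kp tk tp; have [k' [q E1]] := prime_inv pP kp.
have -> : t = (t *+ k) *+ k' - (t *+ p) *+ q.
  by rewrite -!mulrnA E1 mulrnDr mulr1n [(q * p)%N]mulnC addrAC subrr add0r.
by apply: (sgB Ls); apply: (sgMn Ls).
Qed.

Section Ext1.
Variables (L : seq T) (s : T -> E) (t : T) (l : E).
Hypothesis gL : good L s.
Hypothesis Ut : U t.
Hypothesis tpL : t *+ p \in L.
Hypothesis tnL : t \notin L.
Hypothesis Vl : V l.
Hypothesis pil : pi l = t.
Hypothesis lp : l *+ p = s (t *+ p).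
Hypothesis lht : forall x j, x \in L -> P j -> htin U p (t + x) j -> htin V p l j.

Let Ls : lsub L. Proof. by case: gL. Qed.

Lemma dec_uniq s1 i1 s2 i2 : s1 \in L -> s2 \in L -> (i1 < p)%N -> (i2 < p)%N ->
  s1 + t *+ i1 = s2 + t *+ i2 -> i1 = i2 /\ s1 = s2.
Proof.
move=> s1L s2L i1p i2p.
wlog le12 : s1 i1 s2 i2 s1L s2L i1p i2p / (i1 <= i2)%N.
  move=> W Heq; case: (leqP i1 i2) => [le|/ltnW le]; first exact: W.
  by have [-> ->] := W _ _ _ _ s2L s1L i2p i1p le (esym Heq).
move=> Heq.
have Hk : t *+ (i2 - i1) \in L.
  have -> : t *+ (i2 - i1) = s1 - s2.
    have e1 : s1 = s2 + t *+ i2 - t *+ i1 by rewrite -Heq addrK.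
    by rewrite mulrnBr // e1 addrAC [s2 + _]addrC addrK.
  by apply: (sgB Ls).
case: (posnP (i2 - i1)) => [/eqP|k0].
  rewrite subn_eq0 => le21; have e : i1 = i2 by apply/eqP; rewrite eqn_leq le12.
  by rewrite -e in Heq *; split => //; apply: (addIr (t *+ i1)).
exfalso; move/negP: tnL; apply; apply: (@t_in _ _ (i2 - i1)) => //.
by rewrite k0 /= (leq_ltn_trans (leq_subr _ _) i2p).
Qed.

Definition decP x (si : T * nat) := [/\ si.1 \in L, (si.2 < p)%N & x = si.1 + t *+ si.2].
Definition sext (x : T) : E :=
  let si := epsilon (inhabits ((0 : T), 0%N)) (decP x) in s si.1 + l *+ si.2.

Lemma sextE s1 i1 : s1 \in L -> (i1 < p)%N -> sext (s1 + t *+ i1) = s s1 + l *+ i1.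
Proof.
move=> s1L i1p; rewrite /sext.
have ex : exists si, decP (s1 + t *+ i1) si by exists (s1, i1).
case: (epsilon_spec (inhabits ((0 : T), 0%N)) _ ex).
case: (epsilon _ _) => s2 i2 /= s2L i2p Heq.
by have [-> ->] := dec_uniq s1L s2L i1p i2p Heq.
Qed.

Definition Lext := [seq x + t *+ i | x <- L, i <- iota 0 p].

Lemma LextP x : x \in Lext <-> exists s1 i1, [/\ s1 \in L, (i1 < p)%N & x = s1 + t *+ i1].
Proof.
split.
  by move/allpairsP => [[a b] /= [aL]]; rewrite mem_iota add0n => /andP [_ bp] ->; exists a, b.
by move=> [a [b [aL bp ->]]]; apply/allpairsP; exists (a, b); rewrite mem_iota add0n bp.
Qed.

Lemma sub_dec s1 i1 s2 i2 : s1 \in L -> s2 \in L -> (i1 < p)%N -> (i2 < p)%N ->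
  exists s3 i3, [/\ s3 \in L, (i3 < p)%N, (s1 + t *+ i1) - (s2 + t *+ i2) = s3 + t *+ i3 &
     s s3 + l *+ i3 = (s s1 + l *+ i1) - (s s2 + l *+ i2)].
Proof.
move=> s1L s2L i1p i2p; case: (leqP i2 i1) => le.
  exists (s1 - s2), (i1 - i2)%N; split.
  - by apply: (sgB Ls).
  - by rewrite (leq_ltn_trans (leq_subr _ _) i1p).
  - by rewrite mulrnBr // opprD addrACA.
  - by case: gL => _ _ _ sB _; rewrite sB // mulrnBr // opprD addrACA.
exists (s1 - s2 - t *+ p), (p + i1 - i2)%N; split.
- by apply: (sgB Ls) => //; apply: (sgB Ls).
- by lia.
- rewrite mulrnBr; last by lia. rewrite mulrnDr.
  by rewrite opprD addrACA !addrA subrK.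
- case: gL => _ _ _ sB _.
  rewrite !sB //; last by apply: (sgB Ls).
  rewrite mulrnBr; last by lia. rewrite mulrnDr lp.
  by rewrite !addrA subrK opprD addrACA addrA.
Qed.

Lemma ext_good : good Lext sext.
Proof.
have L0 : (0:T) \in L by case: Ls.
have s0 := good_s0 gL.
case: gL => _ LU Ls1 sB sH.
split.
- split.
    by apply/LextP; exists 0, 0%N; rewrite mulr0n addr0 L0 prime_gt0.
  move=> x y /LextP [s1 [i1 [s1L i1p ->]]] /LextP [s2 [i2 [s2L i2p ->]]].
  have [s3 [i3 [s3L i3p -> _]]] := sub_dec s1L s2L i1p i2p.
  by apply/LextP; exists s3, i3.
- move=> x /LextP [s1 [i1 [s1L i1p ->]]].
  by apply: (sgD Usub); [apply: LU | apply: (sgMn Usub)].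
- move=> x /LextP [s1 [i1 [s1L i1p ->]]]; rewrite sextE //.
  have [V1 P1] := Ls1 _ s1L; split; first by apply: (sgD Vsub) => //; apply: (sgMn Vsub).
  by rewrite piD piMn P1 pil.
- move=> x y /LextP [s1 [i1 [s1L i1p ->]]] /LextP [s2 [i2 [s2L i2p ->]]].
  have [s3 [i3 [s3L i3p -> E3]]] := sub_dec s1L s2L i1p i2p.
  by rewrite !sextE.
- move=> x j /LextP [s1 [i1 [s1L i1p ->]]] Pj hx; rewrite sextE //.
  move: hx; case: (posnP i1) => [->|i10] hx.
    by rewrite mulr0n addr0; apply: sH => //; move: hx; rewrite mulr0n addr0.
  have [i' [q Eq]] := prime_inv pP (introT andP (conj i10 i1p)).
  have hl : htin V p l j.
    apply: (lht (x := s1 *+ i' + (t *+ p) *+ q)) => //.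
      by apply: (sgD Ls); apply: (sgMn Ls).
    have -> : t + (s1 *+ i' + t *+ p *+ q) = (s1 + t *+ i1) *+ i'.
      rewrite mulrnDl -!mulrnA Eq mulrnDr mulr1n [(q * p)%N]mulnC.
      by rewrite addrCA [t + _]addrC.
    exact: htMn.
  have ht : htin U p t j.
    case: hl => f Vf fl; exists (pi f); first exact: VU.
    by rewrite -piMn fl pil.
  apply: (htD Vsub); last by apply: htMn.
  apply: sH => //; have -> : s1 = (s1 + t *+ i1) - t *+ i1 by rewrite addrK.
  by apply: (htB Usub) => //; apply: htMn.
Qed.

Lemma ext_agree x : x \in L -> sext x = s x.
Proof. by move=> xL; rewrite -[x]addr0 -(mulr0n t) sextE ?prime_gt0 // mulr0n !addr0. Qed.

Lemma ext_t : sext t = l.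
Proof.
have L0 : (0:T) \in L by case: Ls.
by rewrite -[t]add0r -[t]mulr1n sextE ?prime_gt1 // (good_s0 gL) add0r mulr1n.
Qed.

Lemma ext_sub : {subset L <= Lext}.
Proof. by move=> x xL; apply/LextP; exists x, 0%N; rewrite mulr0n addr0 prime_gt0. Qed.

Lemma ext_tin : t \in Lext.
Proof.
have L0 : (0:T) \in L by case: Ls.
by apply/LextP; exists 0, 1%N; rewrite add0r mulr1n prime_gt1.
Qed.
End Ext1.

Hypothesis P0 : P 0%N.
Hypothesis lift : forall u, U u -> exists2 e, V e & pi e = u.
Hypothesis pure : forall w j, V w -> pi w = 0 -> htin V p w j ->
  exists k, [/\ V k, pi k = 0 & k *+ p ^ j = w].
Hypothesis bound : forall j, P j -> ~ P j.+1 -> forall k, V k -> pi k = 0 -> k *+ p ^ j = 0.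
Hypothesis maxb : forall (L : seq T) t, lsub L -> (forall x, x \in L -> U x) -> U t -> t \notin L ->
  exists B, forall x j, x \in L -> P j -> htin U p (t + x) j -> (j <= B)%N.
Hypothesis ptors : forall t, U t -> exists n, t *+ p ^ n = 0.

Lemma step (L : seq T) s t : good L s -> U t -> t *+ p \in L ->
  exists L' s', [/\ good L' s', {subset L <= L'}, (forall x, x \in L -> s' x = s x) & t \in L'].
Proof.
move=> gL Ut tpL.
case: (boolP (t \in L)) => [tL|tnL]; first by exists L, s; split.
have gL' := gL; case: gL' => Ls LU Ls1 sB sH.
pose Q j := P j /\ exists2 x, x \in L & htin U p (t + x) j.
have L0 : (0 : T) \in L by case: Ls.
have Q0 : Q 0%N by split => //; exists 0 => //; apply/ht0; rewrite addr0.
have [B HB] := maxb Ls LU Ut tnL.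
have [h [[Ph [s0 s0L hth]] hmax]] : exists h, Q h /\ forall j, Q j -> (j <= h)%N.
  by apply: (max_exists (B := B)) => // j [Pj [x xL hx]]; apply: (HB x).
set t' := t + s0.
have Ut' : U t' by apply: (sgD Usub) => //; apply: LU.
have t'nL : t' \notin L.
  apply/negP => t'L; move/negP: tnL; apply.
  have -> : t = t' - s0 by rewrite /t' addrK.
  by apply: (sgB Ls).
have t'p : t' *+ p \in L.
  rewrite /t' mulrnDl; apply: (sgD Ls) => //; by apply: (sgMn Ls).
case: hth => u Uu tu.
have [eu Veu pieu] := lift Uu.
set l0 := eu *+ p ^ h.
have pil0 : pi l0 = t' by rewrite /l0 piMn pieu.
set a := s (t' *+ p) - l0 *+ p.
have [Vs pis] := Ls1 _ t'p.
have Va : V a by apply: (sgB Vsub) => //; apply: (sgMn Vsub); apply: (sgMn Vsub).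
have pia : pi a = 0 by rewrite /a piB pis piMn pil0 subrr.
have [l [Vl pil lp hl]] : exists l, [/\ V l, pi l = t', l *+ p = s (t' *+ p) & htin V p l h].
  case: (classic (P h.+1)) => Ph1.
    have hta : htin V p a h.+1.
      apply: (htB Vsub).
        apply: sH => //; exists u => //; by rewrite expnSr mulrnA tu.
      by exists eu => //; rewrite /l0 expnSr mulrnA.
    have [k [Vk pik kp]] := pure Va pia hta.
    exists (l0 + k *+ p ^ h); split.
    - by apply: (sgD Vsub); [apply: (sgMn Vsub) | apply: (sgMn Vsub)].
    - by rewrite piD pil0 piMn pik mul0rn addr0.
    - by rewrite mulrnDl -[k *+ p ^ h *+ p]mulrnA -expnSr kp /a addrC subrK.
    - exists (eu + k); first by apply: (sgD Vsub).
      by rewrite mulrnDl.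
  have hta : htin V p a h.
    apply: (htB Vsub).
      apply: sH => //; exists (u *+ p); first by apply: (sgMn Usub).
      by rewrite mulrnAC tu.
    exists (eu *+ p); first by apply: (sgMn Vsub).
    by rewrite /l0 mulrnAC.
  have [k [Vk pik kp]] := pure Va pia hta.
  have a0 : a = 0 by rewrite -kp; apply: bound.
  exists l0; split => //.
  - by apply: (sgMn Vsub).
  - by apply/eqP; rewrite eq_sym -subr_eq0 -/a a0.
  - by exists eu.
have lht : forall x j, x \in L -> P j -> htin U p (t' + x) j -> htin V p l j.
  move=> x j xL Pj hx.
  have Qj : Q j.
    split => //; exists (s0 + x); first by apply: (sgD Ls).
    by rewrite addrA.
  exact: (htle Vsub hl (hmax j Qj)).
have gE := ext_good gL Ut' t'p t'nL Vl pil lp lht.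
exists (Lext L t'), (sext L s t' l); split => //.
- by move=> x xL; apply: ext_sub.
- by move=> x xL; apply: (ext_agree l gL t'p t'nL).
- have -> : t = t' - s0 by rewrite /t' addrK.
  case: gE => LE _ _ _ _; apply: (sgB LE); first by apply: (ext_tin t' gL).
  by apply: ext_sub.
Qed.

Lemma add1 (L : seq T) s t : good L s -> U t ->
  exists L' s', [/\ good L' s', {subset L <= L'}, (forall x, x \in L -> s' x = s x) & t \in L'].
Proof.
move=> gL Ut; have [n tn] := ptors Ut.
suff H : forall k L s, good L s -> t *+ p ^ k \in L ->
  exists L' s', [/\ good L' s', {subset L <= L'}, (forall x, x \in L -> s' x = s x) & t \in L'].
  apply: (H n) => //; rewrite tn; by case: gL => [[]].
elim=> [|k IH] {gL}L {}s gL tk.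
  by exists L, s; split => //; move: tk; rewrite expn0 mulr1n.
have tk' : (t *+ p ^ k) *+ p \in L by rewrite -mulrnA -expnSr.
have [L1 [s1 [g1 sub1 ag1 u1]]] := step gL (sgMn Usub _ Ut) tk'.
have [L2 [s2 [g2 sub2 ag2 t2]]] := IH _ _ g1 u1.
exists L2, s2; split => //.
- by move=> x xL; apply: sub2; apply: sub1.
- by move=> x xL; rewrite ag2 ?ag1 //; apply: sub1.
Qed.

Variables (idx : T -> nat) (en : nat -> T).
Hypothesis enK : forall x, en (idx x) = x.

Definition nextR n (st st' : seq T * (T -> E)) :=
  [/\ good st'.1 st'.2, {subset st.1 <= st'.1}, (forall x, x \in st.1 -> st'.2 x = st.2 x) &
     (U (en n) -> en n \in st'.1)].

Lemma next_ex n st : good st.1 st.2 -> exists st', nextR n st st'.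
Proof.
move=> g; case: (classic (U (en n))) => Un.
  have [L' [s' [g' sub ag tin]]] := add1 g Un.
  by exists (L', s'); split.
by exists st; split.
Qed.

Variables (L0 : seq T) (s0 : T -> E).
Hypothesis g0 : good L0 s0.

Fixpoint stg (n : nat) : seq T * (T -> E) :=
  match n with 0 => (L0, s0) | n'.+1 => epsilon (inhabits (L0, s0)) (nextR n' (stg n')) end.

Lemma stg_good n : good (stg n).1 (stg n).2.
Proof.
elim: n => [|n IH] //=.
by case: (epsilon_spec (inhabits (L0, s0)) _ (next_ex n IH)).
Qed.

Lemma stg_next n : nextR n (stg n) (stg n.+1).
Proof. exact: (epsilon_spec (inhabits (L0, s0)) _ (next_ex n (stg_good n))). Qed.

Lemma stg_mono n m : (n <= m)%N ->
  {subset (stg n).1 <= (stg m).1} /\ (forall x, x \in (stg n).1 -> (stg m).2 x = (stg n).2 x).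
Proof.
elim: m => [|m IH]; first by rewrite leqn0 => /eqP ->; split.
rewrite leq_eqVlt => /orP [/eqP ->|]; first by split.
rewrite ltnS => /IH [sb ag]; case: (stg_next m) => _ sb' ag' _; split.
  by move=> x /sb /sb'.
by move=> x xn; rewrite ag' ?ag //; apply: sb.
Qed.

Definition sglob (x : T) : E := (stg (idx x).+1).2 x.

Lemma sglob_in x : U x -> x \in (stg (idx x).+1).1.
Proof. by move=> Ux; case: (stg_next (idx x)) => _ _ _; rewrite enK; apply. Qed.

Lemma sglob_eq x m : U x -> ((idx x).+1 <= m)%N -> (stg m).2 x = sglob x /\ x \in (stg m).1.
Proof.
move=> Ux le; have [sb ag] := stg_mono le; split; last by apply: sb; apply: sglob_in.
by rewrite ag //; apply: sglob_in.
Qed.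

Theorem asl : exists s : T -> E, [/\ (forall x, x \in L0 -> s x = s0 x),
  (forall x, U x -> V (s x) /\ pi (s x) = x) &
  (forall x y, U x -> U y -> s (x - y) = s x - s y)].
Proof.
exists sglob; split.
- move=> x xL; have Ux : U x by case: g0 => _ LU _ _ _; apply: LU.
  by rewrite /sglob; have [_ ag] := stg_mono (leq0n (idx x).+1); rewrite ag.
- move=> x Ux; have [_ _ Ls1 _ _] := stg_good (idx x).+1.
  by apply: Ls1; apply: sglob_in.
- move=> x y Ux Uy.
  set m := ((idx x).+1 + (idx y).+1 + (idx (x - y)).+1)%N.
  have Uxy : U (x - y) by apply: (sgB Usub).
  have l1 : ((idx x).+1 <= m)%N by rewrite /m; lia.
  have l2 : ((idx y).+1 <= m)%N by rewrite /m; lia.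
  have l3 : ((idx (x - y)).+1 <= m)%N by rewrite /m; lia.
  have [ex xin] := sglob_eq Ux l1.
  have [ey yin] := sglob_eq Uy l2.
  have [exy _] := sglob_eq Uxy l3.
  have [_ _ _ sB _] := stg_good m.
  by rewrite -ex -ey -exy sB.
Qed.

End Machine.

Section NT.
Variables (p : nat) (pP : prime p) (G : zmodType) (pG : is_p_group p G).

Lemma cop_inv m (x : G) : coprime p m -> exists m', x *+ (m * m') = x.
Proof.
move=> cpm; have [r xr] := pG x.
have m0 : (0 < m)%N.
  case: m cpm => // ; rewrite /coprime gcdn0 => /eqP p1.
  by have := prime_gt1 pP; rewrite p1.
case: (@egcdnP m (p ^ r) m0) => km kn Hb _.
have g1 : gcdn m (p ^ r) = 1%N by apply/eqP; apply: coprimeXr; rewrite coprime_sym.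
rewrite g1 in Hb; exists km.
by rewrite mulnC Hb mulrnDr mulnC mulrnA xr mul0rn add0r mulr1n.
Qed.

Lemma cop_inj m (x : G) : coprime p m -> x *+ m = 0 -> x = 0.
Proof. by move=> cpm xm; have [m' <-] := cop_inv x cpm; rewrite mulrnA xm mul0rn. Qed.

Lemma cop_div m (x : G) : coprime p m -> exists y, y *+ m = x.
Proof. by move=> cpm; have [m' e] := cop_inv x cpm; exists (x *+ m'); rewrite -mulrnA mulnC. Qed.

Lemma ulm1_of_pow (x : G) : (forall k, exists y : G, y *+ p ^ k = x) -> ulm1 x.
Proof.
move=> H n n0; have [m cpm ->] := pfactor_coprime pP n0.
have [y <-] := H (logn p n).
have [z <-] := cop_div y cpm.
by exists z; rewrite mulrnA.
Qed.

Lemma bounded_pow : bounded G -> exists K, forall x : G, x *+ p ^ K = 0.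
Proof.
move=> [n n0 Hn]; have [m cpm en] := pfactor_coprime pP n0.
exists (logn p n) => x; apply: (cop_inj cpm).
by rewrite -mulrnA mulnC -en Hn.
Qed.
End NT.

Lemma alg1 (A : zmodType) (x u y w z v : A) :
  (x + u) - (y + w) + (z + v) = (x - y + z) + (u - w + v).
Proof.
apply/eqP; rewrite -subr_eq0; apply/eqP; rewrite !opprD !opprK !addrA.
rewrite (ACl (1*7*2*10*8*3*11*4*5*9*6*12)) /=.
by repeat rewrite ?subrr ?add0r.
Qed.

Lemma alg2 (A : zmodType) (a b c d e g : A) :
  (a - b + c) - (a - d + e) + (b - d + g) - (c - e + g) = 0.
Proof.
rewrite !opprD !opprK !addrA.
rewrite (ACl (1*4*7*2*3*10*5*8*11*6*9*12)) /=.
by repeat rewrite ?subrr ?add0r.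
Qed.

Lemma sgT (G : zmodType) : is_subgroup (fun _ : G => True).
Proof. by []. Qed.

Lemma fin_bound (G : eqType) (Q : G -> nat -> Prop) (L : seq G) :
  (forall x, x \in L -> exists B, forall j, Q x j -> (j <= B)%N) ->
  exists B, forall x j, x \in L -> Q x j -> (j <= B)%N.
Proof.
elim: L => [|a L IH] H; first by exists 0%N.
have [Ba HBa] := H a (mem_head _ _).
have [BL HBL] : exists BL, forall x j, x \in L -> Q x j -> (j <= BL)%N.
  by apply: IH => x xL; apply: H; rewrite in_cons xL orbT.
exists (maxn Ba BL) => x j; rewrite in_cons => /orP [/eqP ->|xL] Qj.
  by rewrite leq_max HBa.
by rewrite leq_max (HBL x j) ?orbT.
Qed.

Fixpoint mkF (T : zmodType) (u : T) (n : nat) : seq (T * T) :=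
  match n with 0 => [::] | n'.+1 => (u *+ n', u) :: mkF u n' end.

Lemma mkF_in (T : zmodType) (u : T) n i : (i < n)%N -> List.In (u *+ i, u) (mkF u n).
Proof.
elim: n => [|n IH] //; rewrite ltnS leq_eqVlt => /orP [/eqP ->|lt]; first by left.
by right; apply: IH.
Qed.

Section Back.
Variables (p : nat) (pP : prime p) (T A : countZmodType).
Hypothesis pT : is_p_group p T.
Hypothesis pA : is_p_group p A.
Variables (c : T -> T -> A) (hc : cocycle c).
Hypothesis hcl : in_product_closure (@coboundary T A) c.

Let cc : cocyc T A := exist _ c hc.
Let E := ext cc.
Let pi (e : E) : T := e.1.
Let piB : forall x y : E, pi (x - y) = pi x - pi y.
Proof. by move=> x y; rewrite /pi ext_fstB. Qed.

Let pure : forall (w : E) j, True -> pi w = 0 -> htin (fun _ => True) p w j ->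
  exists k : E, [/\ True, pi k = 0 & k *+ p ^ j = w].
Proof.
move=> w j _ w0 [f _ fw].
set u := f.1.
have [b [phi [phi0 bdef]] agree] := hcl (mkF u (p ^ j)).
pose sec (i : nat) : E := (u *+ i, - phi (u *+ i)).
have secE : forall i, (i <= p ^ j)%N -> sec i = sec 1%N *+ i.
  elim=> [|i IH] le.
    by rewrite mulr0n /sec mulr0n phi0 oppr0.
  rewrite mulrS -IH ?(ltnW le) // [RHS]addrC extD /sec /=.
  have := agree _ (mkF_in u le) => /= ->.
  rewrite bdef mulr1n; congr pair; first by rewrite mulrSr.
  rewrite -mulrSr; set a := phi (u *+ i); set b1 := phi u; set d := phi (u *+ i.+1).
  by rewrite addrC addrA addrK addrAC subrr add0r.
have s0 : sec 1%N *+ p ^ j = 0.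
  rewrite -secE // /sec.
  have -> : u *+ p ^ j = 0 by rewrite /u -ext_fstMn fw.
  by rewrite phi0 oppr0.
exists (f - sec 1%N); split => //.
  by rewrite /pi ext_fstB /sec /= mulr1n subrr.
by rewrite mulrnBl s0 subr0.
Qed.

Let good0 (P : nat -> Prop) : good p pi (fun _ => True) (fun _ => True) P [:: 0] (fun _ => (0 : E)).
Proof.
split.
- split; first by rewrite mem_seq1.
  by move=> x y; rewrite !mem_seq1 => /eqP -> /eqP ->; rewrite subrr.
- by [].
- by move=> x; rewrite mem_seq1 => /eqP ->; split.
- by move=> x y _ _; rewrite subrr.
- by move=> x j _ _ _; exists 0 => //; rewrite mul0rn.
Qed.

Let enK : forall x : T, odflt 0 (unpickle (pickle x)) = x.
Proof. by move=> x; rewrite pickleK. Qed.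

Let lift : forall u : T, True -> exists2 e : E, True & pi e = u.
Proof. by move=> u _; exists (u, 0). Qed.

Let ptors : forall t : T, True -> exists n, t *+ p ^ n = 0.
Proof. by move=> t _; apply: pT. Qed.

Let sec_cob (s : T -> E) : (forall x, pi (s x) = x) -> (forall x y, s (x - y) = s x - s y) ->
  coboundary c.
Proof.
move=> spi sB.
have sz : s 0 = 0 by have := sB 0 0; rewrite !subrr.
have sN : forall y, s (- y) = - s y by move=> y; rewrite -sub0r sB sz sub0r.
have sD : forall x y, s (x + y) = s x + s y by move=> x y; rewrite -{1}[y]opprK sB sN opprK.
exists (fun x => - (s x).2); split; first by rewrite sz oppr0.
move=> x y; rewrite sD extD /=.
have -> : (s x).1 = x by apply: spi.
have -> : (s y).1 = y by apply: spi.
set a := (s x).2; set b := (s y).2.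
by rewrite opprK [a + b]addrC -[b + a + _]addrA addKr [a + _]addrC addrK.
Qed.

Theorem back : ulm1_trivial T \/ bounded A -> coboundary c.
Proof.
case=> [u1|bA].
- have maxb : forall (L : seq T) t, lsub L -> (forall x, x \in L -> True) -> True -> t \notin L ->
    exists B, forall x j, x \in L -> True -> htin (fun _ => True) p (t + x) j -> (j <= B)%N.
    move=> L t Ls _ _ tnL.
    have [B HB] : exists B, forall x j, x \in L -> htin (fun _ => True) p (t + x) j -> (j <= B)%N.
      apply: (@fin_bound _ (fun x j => htin (fun _ => True) p (t + x) j)).
      move=> x xL; apply: NNPP => nB.
      have tx0 : t + x = 0.
        apply: u1; apply: (ulm1_of_pow pP pT) => k.
        apply: NNPP => nk; apply: nB; exists k => j hj.
        rewrite leqNgt; apply/negP => kj; apply: nk.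
        by have [y _ <-] := htle (sgT T) hj (ltnW kj); exists y.
      move/negP: tnL; apply; have -> : t = - x by rewrite -(addrK x t) tx0 sub0r.
      by apply: (sgN Ls).
    by exists B => x j xL _; apply: HB.
  have bnd : forall j, True -> ~ True -> forall k : E, True -> pi k = 0 -> k *+ p ^ j = 0.
    by [].
  have [s [_ sV sB]] := asl (idx := pickle) (en := fun k => odflt 0 (unpickle k)) pP piB (sgT T) (sgT E) (fun _ _ => I) I lift pure bnd maxb ptors enK (good0 (fun _ => True)).
  by apply: (sec_cob (s := s)) => [x|x y]; [case: (sV x I) | apply: sB].
- have [K HK] := bounded_pow pP pA bA.
  pose P := fun j => (j <= K)%N.
  have maxb : forall (L : seq T) t, lsub L -> (forall x, x \in L -> True) -> True -> t \notin L ->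
    exists B, forall x j, x \in L -> P j -> htin (fun _ => True) p (t + x) j -> (j <= B)%N.
    by move=> L t _ _ _ _; exists K => x j _ Pj _.
  have bnd : forall j, P j -> ~ P j.+1 -> forall k : E, True -> pi k = 0 -> k *+ p ^ j = 0.
    move=> j Pj nPj [k1 k2] _ /= k10; rewrite /pi /= in k10; rewrite k10.
    have -> : j = K by apply/eqP; rewrite eqn_leq (Pj : (j <= K)%N) /= leqNgt; apply/negP => h; apply: nPj; exact: h.
    by rewrite ext_inj0Mn HK.
  have [s [_ sV sB]] := asl (idx := pickle) (en := fun k => odflt 0 (unpickle k)) pP piB (sgT T) (sgT E) (fun _ _ => I) (leq0n K) lift pure bnd maxb ptors enK (good0 P).
  by apply: (sec_cob (s := s)) => [x|x y]; [case: (sV x I) | apply: sB].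
Qed.
End Back.

Lemma sgT' (G : zmodType) : is_subgroup (fun _ : G => True).
Proof. by []. Qed.

Section ExactHeight.
Variables (p : nat) (pP : prime p) (A : zmodType).
Hypothesis pA : is_p_group p A.
Hypothesis rA : reduced A.
Hypothesis nbA : ~ bounded A.
Notation ht := (htin (fun _ : A => True) p).

Lemma exact_height N : exists m v, [/\ (N <= m)%N, v *+ p = 0, ht v m & ~ ht v m.+1].
Proof.
apply: NNPP => nE.
have H : forall m v, (N <= m)%N -> v *+ p = 0 -> ht v m -> ht v m.+1.
  by move=> m v lem vp hv; apply: NNPP => nh; apply: nE; exists m, v; split.
have claim : forall r k d, (N <= k)%N -> d *+ p ^ r = 0 -> ht d k -> ht d k.+1.
  elim=> [|r IH] k d lek dr hd.
    by move: dr; rewrite expn0 mulr1n => ->; apply: htz.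
  have hpd : ht (d *+ p) k.+1.
    by case: hd => w _ <-; exists w => //; rewrite expnSr mulrnA.
  have pdr : (d *+ p) *+ p ^ r = 0 by rewrite -mulrnA -expnS.
  have [b _ eb] := IH k.+1 _ (leqW lek) pdr hpd.
  set d' := d - b *+ p ^ k.+1.
  have hd' : ht d' k.
    apply: (htB (sgT' A)) => //; exists (b *+ p) => //.
    by rewrite -mulrnA -expnS.
  have d'p : d' *+ p = 0.
    by rewrite /d' mulrnBl -mulrnA -expnSr eb subrr.
  have := H k d' lek d'p hd'.
  have -> : d = d' + b *+ p ^ k.+1 by rewrite /d' subrK.
  move=> h1; apply: (htD (sgT' A)) => //; by exists b.
have allk : forall d, ht d N -> forall i, ht d (N + i).
  move=> d hd; elim=> [|i IH]; first by rewrite addn0.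
  have [r dr] := pA d.
  by rewrite addnS; apply: (claim r) => //; rewrite leq_addr.
pose D := fun d => ht d N.
have Dsub : is_subgroup D.
  by split; [apply: htz | move=> x y; apply: htB].
have Ddiv : is_divisible_subgroup D.
  split => // d n Dd n0.
  have [m cpm en] := pfactor_coprime pP n0.
  have [w _ ew] := allk d Dd (logn p n).
  set y0 := w *+ p ^ N.
  have [m' em'] := cop_inv pP pA y0 cpm.
  exists (y0 *+ m').
    by apply: (htMn (sgT' A)); exists w.
  by rewrite en mulrnA -[y0 *+ m' *+ m]mulrnA mulnC em' /y0 -mulrnA -expnD ew.
have all0 : forall a : A, a *+ p ^ N = 0.
  by move=> a; apply: (rA Ddiv); exists a.
by apply: nbA; exists (p ^ N)%N; [rewrite expn_gt0 prime_gt0 | ].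
Qed.
End ExactHeight.

Section ListAdd.
Variables (p : nat) (pP : prime p) (T : countZmodType).
Hypothesis pT : is_p_group p T.

Lemma list_add (L : seq T) t : lsub L -> exists L' : seq T, [/\ lsub L', {subset L <= L'} & t \in L'].
Proof.
move=> Ls.
pose P := fun j : nat => j = 0%N.
have g : good p (fun x : T => x) (fun _ : T => True) (fun _ : T => True) P L (fun x : T => x).
  split => // x j _ -> _; exists x => //; by rewrite expn0 mulr1n.
have pure : forall (w : T) j, True -> w = 0 -> htin (fun _ => True) p w j ->
    exists k, [/\ True, k = 0 & k *+ p ^ j = w].
  by move=> w j _ -> _; exists 0; rewrite mul0rn.
have bnd : forall j, P j -> ~ P j.+1 -> forall k : T, True -> k = 0 -> k *+ p ^ j = 0.
  by move=> j _ _ k _ ->; rewrite mul0rn.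
have maxb : forall (L : seq T) t, lsub L -> (forall x, x \in L -> True) -> True -> t \notin L ->
    exists B, forall x j, x \in L -> P j -> htin (fun _ => True) p (t + x) j -> (j <= B)%N.
  by move=> L0 t0 _ _ _ _; exists 0%N => x j _ ->.
have lift : forall u : T, True -> exists2 e : T, True & e = u by move=> u _; exists u.
have piB : forall x y : T, (fun x => x) (x - y) = (fun x => x) x - (fun x => x) y by [].
have ptors : forall t : T, True -> exists n, t *+ p ^ n = 0 by move=> t0 _; apply: pT.
have P0 : P 0%N by [].
have [L' [s' [[Ls' _ _ _ _] sub _ tin]]] :=
  add1 (t := t) pP piB (sgT' T) (sgT' T) (fun _ _ => I) P0 lift pure bnd maxb ptors g I.
by exists L'.
Qed.
End ListAdd.

Lemma pairMn (T A : zmodType) (e : T * A) n : e *+ n = (e.1 *+ n, e.2 *+ n).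
Proof.
elim: n => [|n IH]; first by rewrite !mulr0n.
by rewrite !mulrS IH.
Qed.

Section Hom.
Variables (p : nat) (pP : prime p) (T A : countZmodType).
Hypothesis pT : is_p_group p T.

Lemma hom_exists (S : seq T) (x0 : T) (z : A) m :
  lsub S -> x0 \in S -> x0 != 0 -> x0 *+ p = 0 ->
  (forall j, htin (fun t => t \in S) p x0 j -> (j <= m)%N) ->
  z *+ p ^ m.+1 = 0 ->
  exists g : T -> A, (forall a b, a \in S -> b \in S -> g (a - b) = g a - g b) /\ g x0 = z *+ p ^ m.
Proof.
move=> Ss x0S x0n0 x0p hm zp.
pose E := (T * A)%type.
pose pi := fun e : E => e.1.
have piB : forall x y : E, pi (x - y) = pi x - pi y by [].
pose U := fun t : T => t \in S.
pose V := fun e : E => e.1 \in S /\ exists i : int, e.2 = z *~ i.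
have Vsub : is_subgroup V.
  split; first by split; [case: Ss | exists 0; rewrite mulr0z].
  move=> [x1 x2] [y1 y2] [/= x1S [i /= ->]] [/= y1S [i' /= ->]]; split => /=.
    by apply: (sgB Ss).
  by exists (i - i'); rewrite mulrzBr.
have VU : forall e, V e -> U (pi e) by move=> e [].
pose P := fun j : nat => (j <= m.+1)%N.
have P0 : P 0%N by [].
have lift : forall u, U u -> exists2 e, V e & pi e = u.
  by move=> u Uu; exists (u, 0) => //; split => //; exists 0; rewrite mulr0z.
have pure : forall w j, V w -> pi w = 0 -> htin V p w j ->
    exists k, [/\ V k, pi k = 0 & k *+ p ^ j = w].
  move=> [w1 w2] j _ /= w10 [[f1 f2] [f1S [i fi]] fw].
  exists (0, f2); split => //.
    by split; [case: Ss | exists i].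
  move: fw; rewrite !pairMn /= mul0rn => -[_ <-]; by rewrite w10.
have bnd : forall j, P j -> ~ P j.+1 -> forall k, V k -> pi k = 0 -> k *+ p ^ j = 0.
  move=> j Pj nPj [k1 k2] [_ [i /= ->]] /= k10.
  have -> : j = m.+1 by apply/eqP; rewrite eqn_leq (Pj : (j <= m.+1)%N) /= leqNgt; apply/negP => h; apply: nPj; exact: h.
  by rewrite pairMn /= k10 mul0rn pmulrn mulrzAC -pmulrn zp mul0rz.
have maxb : forall (L : seq T) t, lsub L -> (forall x, x \in L -> U x) -> U t -> t \notin L ->
    exists B, forall x j, x \in L -> P j -> htin U p (t + x) j -> (j <= B)%N.
  by move=> L t _ _ _ _; exists m.+1 => x j _ Pj _.
have ptors : forall t, U t -> exists n, t *+ p ^ n = 0 by move=> t _; apply: pT.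
have enK : forall x : T, odflt 0 (unpickle (pickle x)) = x by move=> x; rewrite pickleK.
have g0 : good p pi U V P [:: 0] (fun _ => (0 : E)).
  split.
  - split; first by rewrite mem_seq1.
    by move=> x y; rewrite !mem_seq1 => /eqP -> /eqP ->; rewrite subrr.
  - by move=> x; rewrite mem_seq1 => /eqP ->; case: Ss.
  - move=> x; rewrite mem_seq1 => /eqP ->; split => //.
    by split; [case: Ss | exists 0; rewrite mulr0z].
  - by move=> x y _ _; rewrite subrr.
  - by move=> x j _ _ _; exists 0; [split; [case: Ss | exists 0; rewrite mulr0z] | rewrite mul0rn].
pose l := ((x0, z *+ p ^ m) : E).
have Ut : U x0 by [].
have tpL : x0 *+ p \in [:: (0 : T)] by rewrite x0p mem_seq1.
have tnL : x0 \notin [:: (0 : T)] by rewrite mem_seq1.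
have Vl : V l by split => //; exists (p ^ m)%N; rewrite -pmulrn.
have pil : pi l = x0 by [].
have lp : l *+ p = (fun _ => (0 : E)) (x0 *+ p).
  by rewrite pairMn /= x0p -mulrnA -expnSr zp.
have lht : forall x j, x \in [:: (0 : T)] -> P j -> htin U p (x0 + x) j -> htin V p l j.
  move=> x j; rewrite mem_seq1 => /eqP -> _; rewrite addr0 => hx.
  have jm := hm j hx.
  case: hx => y yS yx.
  exists (y, z *+ p ^ (m - j)).
    by split => //; exists (p ^ (m - j))%N; rewrite -pmulrn.
  by rewrite pairMn /= yx -mulrnA -expnD subnK.
have gE := ext_good pP piB Ss Vsub VU g0 Ut tpL tnL Vl pil lp lht.
have [s [sag sV sB]] := asl (idx := pickle) (en := fun k => odflt 0 (unpickle k))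
   pP piB Ss Vsub VU P0 lift pure bnd maxb ptors enK gE.
exists (fun t => (s t).2); split.
  by move=> a b aS bS; rewrite sB.
rewrite sag; first by rewrite (ext_t pP l g0 tpL tnL).
exact: (ext_tin pP x0 g0).
Qed.
End Hom.

Lemma tele (T A : zmodType) (f : T -> A) (y : T) n : f 0 = 0 ->
  \sum_(i < n) (f y - f (y *+ i + y) + f (y *+ i)) = f y *+ n - f (y *+ n).
Proof.
move=> f0; elim: n => [|n IH]; first by rewrite big_ord0 !mulr0n f0 subrr.
rewrite big_ord_recr /= IH -mulrSr [f y *+ n.+1]mulrS.
apply/eqP; rewrite -subr_eq0; apply/eqP; rewrite !opprD !opprK !addrA.
rewrite (ACl (1*7*5*2*3*6*8*4)) /=.
by repeat rewrite ?subrr ?add0r.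
Qed.

Section Fwd.
Variables (p : nat) (pP : prime p) (T A : countZmodType).
Hypothesis pT : is_p_group p T.
Hypothesis pA : is_p_group p A.
Hypothesis rA : reduced A.
Hypothesis nbA : ~ bounded A.
Variables (x0 : T).
Hypothesis x0n : x0 != 0.
Hypothesis x0p : x0 *+ p = 0.
Hypothesis hx0 : forall k, exists y, y *+ p ^ k = x0.
Notation ht := (htin (fun _ : A => True) p).
Definition enT (k : nat) : T := odflt 0 (unpickle k).
Definition enA (k : nat) : A := odflt 0 (unpickle k).

Lemma lexp (L : seq T) : exists N, forall s, s \in L -> s *+ p ^ N = 0.
Proof.
elim: L => [|a L [NL HL]]; first by exists 0%N.
have [Na Ha] := pT a.
exists (maxn Na NL) => s; rewrite in_cons => /orP [/eqP ->|sL].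
  by rewrite -(subnKC (leq_maxl Na NL)) expnD mulrnA Ha mul0rn.
by rewrite -(subnKC (leq_maxr Na NL)) expnD mulrnA HL // mul0rn.
Qed.

Definition Out := (seq T * A * (T -> A) * nat * T)%type.
Definition stageP J (S : seq T) (P0 : A) (o : Out) :=
  [/\ lsub o.1.1.1.1, {subset S <= o.1.1.1.1}, enT J \in o.1.1.1.1,
      o.2 \in o.1.1.1.1 /\ o.2 *+ p ^ o.1.2.+1 = x0 &
      [/\ forall a b, a \in S -> b \in S -> o.1.1.2 (a - b) = o.1.1.2 a - o.1.1.2 b,
          o.1.1.2 x0 = o.1.1.1.2 - P0 &
          ~ ht (enA J - o.1.1.1.2) o.1.2.+1]].

Lemma stage_ex J S P0 : lsub S -> x0 \in S -> exists o, stageP J S P0 o.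
Proof.
move=> Ss x0S.
have [N HN] := lexp S.
have [m [v' [Nm v'p hv' nhv']]] := exact_height pP pA rA nbA N.
set a := enA J.
have [v [z [zv zp nh]]] : exists v z, [/\ z *+ p ^ m = v, z *+ p ^ m.+1 = 0 & ~ ht (a - (P0 + v)) m.+1].
  case: (classic (ht (a - P0) m.+1)) => h.
    case: hv' => z _ zv; exists v', z; split => //.
      by rewrite expnSr mulrnA zv.
    move=> h2; apply: nhv'.
    have -> : v' = (a - P0) - (a - (P0 + v')).
      apply/eqP; rewrite eq_sym -subr_eq0; apply/eqP; rewrite !opprD !opprK !addrA.
      rewrite (ACl (1*3*4*2*5*6)) /=.
      by repeat rewrite ?subrr ?add0r.
    exact: (htB (sgT' A)).
  exists 0, 0; split; [by rewrite mul0rn | by rewrite mul0rn | by rewrite addr0].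
have hm : forall j, htin (fun t => t \in S) p x0 j -> (j <= m)%N.
  move=> j [y yS yx]; apply: (leq_trans _ Nm); rewrite leqNgt; apply/negP => Nj.
  by move/eqP: x0n; apply; rewrite -yx -(subnKC (ltnW Nj)) expnD mulrnA HN // mul0rn.
have [g [gB gx0]] := hom_exists pP pT Ss x0S x0n x0p hm zp.
have [y hy] := hx0 m.+1.
have [S1 [S1s sub1 yS1]] := list_add pP pT y Ss.
have [S2 [S2s sub2 eS2]] := list_add pP pT (enT J) S1s.
exists (S2, P0 + v, g, m, y); split => //=.
- by move=> x xS; apply: sub2; apply: sub1.
- by split => //; apply: sub2.
- by split => //; rewrite gx0 zv [P0 + _]addrC addrK.
Qed.

Variables (S0 : seq T).
Hypothesis S0s : lsub S0.
Hypothesis x0S0 : x0 \in S0.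

Definition inhO : inhabited Out := inhabits ([::], 0, (fun _ => 0), 0%N, 0).

Fixpoint st (J : nat) : seq T * A :=
  match J with
  | 0 => (S0, 0)
  | J'.+1 => let o := epsilon inhO (stageP J' (st J').1 (st J').2) in (o.1.1.1.1, o.1.1.1.2)
  end.
Definition out J := epsilon inhO (stageP J (st J).1 (st J).2).

Lemma st_inv J : lsub (st J).1 /\ x0 \in (st J).1.
Proof.
elim: J => [|J [Ls xS]] //=.
have := epsilon_spec inhO _ (stage_ex J (st J).2 Ls xS).
by case=> Ls' sub _ _ _; split => //; apply: sub.
Qed.

Lemma out_spec J : stageP J (st J).1 (st J).2 (out J).
Proof. by have [Ls xS] := st_inv J; apply: (epsilon_spec inhO _ (stage_ex J (st J).2 Ls xS)). Qed.

Definition Sj J := (st J).1.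
Definition Pj J := (st J).2.
Definition gj J := (out J).1.1.2.

Lemma SjS J : Sj J.+1 = (out J).1.1.1.1. Proof. by []. Qed.
Lemma PjS J : Pj J.+1 = (out J).1.1.1.2. Proof. by []. Qed.

Lemma Sj_mono j k : (j <= k)%N -> {subset Sj j <= Sj k}.
Proof.
elim: k => [|k IH]; first by rewrite leqn0 => /eqP ->.
rewrite leq_eqVlt => /orP [/eqP ->|]; first by [].
rewrite ltnS => /IH sb x /sb; rewrite SjS; by case: (out_spec k) => _ sub _ _ _; apply: sub.
Qed.

Lemma inSj x M : ((pickle x).+1 <= M)%N -> x \in Sj M.
Proof.
move=> le; apply: (Sj_mono le); rewrite SjS.
case: (out_spec (pickle x)) => _ _ + _ _; by rewrite /enT pickleK.
Qed.

Lemma Sj_sub J : lsub (Sj J). Proof. by case: (st_inv J). Qed.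

Lemma gj_add J a b : a \in Sj J -> b \in Sj J -> gj J (a - b) = gj J a - gj J b.
Proof. by move=> aS bS; case: (out_spec J) => _ _ _ _ [H _ _]; apply: H. Qed.

Lemma gj0 J : gj J 0 = 0.
Proof. have [L0 _] := Sj_sub J; by have := gj_add L0 L0; rewrite !subrr. Qed.

Lemma gjD J a b : a \in Sj J -> b \in Sj J -> gj J (a + b) = gj J a + gj J b.
Proof.
move=> aS bS; have [L0 _] := Sj_sub J.
have Nb : gj J (- b) = - gj J b by rewrite -sub0r gj_add // gj0 sub0r.
by rewrite -{1}[b]opprK gj_add ?Nb ?opprK //; apply: (sgN (Sj_sub J)).
Qed.

Definition Phi M t := \sum_(j < M) gj j t.
Definition dl (f : T -> A) a b := f b - f (a + b) + f a.

Lemma Phi0 M : Phi M 0 = 0.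
Proof. by apply: big1 => j _; rewrite gj0. Qed.

Lemma dPhi a b M M' : a \in Sj M -> b \in Sj M -> (M <= M')%N -> dl (Phi M') a b = dl (Phi M) a b.
Proof.
move=> aS bS; elim: M' => [|M' IH]; first by rewrite leqn0 => /eqP ->.
rewrite leq_eqVlt => /orP [/eqP ->|]; first by [].
rewrite ltnS => le; rewrite -(IH le) /dl /Phi !big_ord_recr /= alg1.
have aS' := Sj_mono le aS; have bS' := Sj_mono le bS.
rewrite gjD //.
have -> : gj M' b - (gj M' a + gj M' b) + gj M' a = 0.
  rewrite !opprD !addrA (ACl (1*3*4*2)) /=.
  by repeat rewrite ?subrr ?add0r.
by rewrite addr0.
Qed.

Definition c a b := dl (Phi ((pickle a).+1 + (pickle b).+1)) a b.

Lemma cE a b M : a \in Sj M -> b \in Sj M -> c a b = dl (Phi M) a b.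
Proof.
move=> aS bS; set M0 := ((pickle a).+1 + (pickle b).+1)%N.
have aS0 : a \in Sj M0 by apply: inSj; rewrite /M0; lia.
have bS0 : b \in Sj M0 by apply: inSj; rewrite /M0; lia.
rewrite /c -/M0; case: (leqP M M0) => le.
  exact: dPhi.
by rewrite (dPhi aS0 bS0 (ltnW le)).
Qed.

Lemma c_cocycle : cocycle c.
Proof.
split; [|split].
- move=> x; have [h0 _] := Sj_sub (pickle x).+1.
  rewrite (@cE x 0 (pickle x).+1 (inSj (leqnn _)) h0).
  by rewrite /dl Phi0 addr0 sub0r addNr.
- move=> x y; set M := ((pickle x).+1 + (pickle y).+1)%N.
  rewrite (@cE x y M) ?(@cE y x M) ?inSj //; try by rewrite /M; lia.
  by rewrite /dl [y + x]addrC addrAC [RHS]addrAC [Phi M y + _]addrC.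
- move=> x y z.
  set M := ((pickle x).+1 + (pickle y).+1 + (pickle z).+1 + (pickle (x + y)%R).+1 + (pickle (y + z)%R).+1)%N.
  have le1 : forall a b c d e : nat, (a <= a + b + c + d + e)%N by move=> *; lia.
  have le2 : forall a b c d e : nat, (b <= a + b + c + d + e)%N by move=> *; lia.
  have le3 : forall a b c d e : nat, (c <= a + b + c + d + e)%N by move=> *; lia.
  have le4 : forall a b c d e : nat, (d <= a + b + c + d + e)%N by move=> *; lia.
  have le5 : forall a b c d e : nat, (e <= a + b + c + d + e)%N by move=> *; lia.
  have hx : x \in Sj M by apply: inSj; apply: le1.
  have hy : y \in Sj M by apply: inSj; apply: le2.
  have hz : z \in Sj M by apply: inSj; apply: le3.
  have hxy : x + y \in Sj M by apply: inSj; apply: le4.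
  have hyz : y + z \in Sj M by apply: inSj; apply: le5.
  rewrite (cE hy hz) (cE hxy hz) (cE hx hyz) (cE hx hy) /dl [x + (y + z)]addrA.
  exact: alg2.
Qed.

Fixpoint bndF (F : seq (T * T)) : nat :=
  match F with [::] => 0%N | xy :: F' => ((pickle xy.1).+1 + (pickle xy.2).+1 + bndF F')%N end.

Lemma bndF_in F xy : List.In xy F -> ((pickle xy.1).+1 <= bndF F)%N /\ ((pickle xy.2).+1 <= bndF F)%N.
Proof.
elim: F => [|a F IH] //= [->|/IH [h1 h2]].
  by split; [rewrite -addnA leq_addr | rewrite [(_ + (pickle xy.2).+1)%N]addnC -addnA leq_addr].
by split; [exact: (leq_trans h1 (leq_addl _ _)) | exact: (leq_trans h2 (leq_addl _ _))].
Qed.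

Lemma c_closure : in_product_closure (@coboundary T A) c.
Proof.
move=> F; exists (dl (Phi (bndF F))).
  by exists (Phi (bndF F)); split; [apply: Phi0 | ].
move=> xy /bndF_in [h1 h2]; apply: cE; exact: inSj.
Qed.

Theorem fwd_contra : Ext_is_Polish T A -> False.
Proof.
move=> hpol; have [psi [psi0 cpsi]] := hpol c c_cocycle c_closure.
set a0 := psi x0; set J := pickle a0.
case: (out_spec J) => _ _ _ [yS yx] [_ _ nh].
rewrite -SjS in yS; rewrite -PjS in nh.
set m := (out J).1.2 in yx nh; set y := (out J).2 in yS yx.
have ea : enA J = a0 by rewrite /enA /J pickleK.
rewrite ea in nh.
set q := (p ^ m.+1)%N in yx nh.
have sum1 : \sum_(i < q) c (y *+ i) y = psi y *+ q - a0.
  rewrite /a0 -yx -(tele y q psi0); apply: eq_bigr => i _.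
  by rewrite cpsi.
have sum2 : \sum_(i < q) c (y *+ i) y = Phi J.+1 y *+ q - Phi J.+1 x0.
  rewrite -yx -(tele y q (Phi0 J.+1)); apply: eq_bigr => i _.
  by rewrite (cE (M := J.+1)) //; apply: (sgMn (Sj_sub _)).
have PhiX : Phi J.+1 x0 = Pj J.+1.
  have -> : Phi J.+1 x0 = \sum_(j < J.+1) (Pj j.+1 - Pj j).
    apply: eq_bigr => j _; rewrite /gj PjS.
    by case: (out_spec j) => _ _ _ _ [_ -> _].
  by rewrite -(big_mkord xpredT (fun j => Pj j.+1 - Pj j)) telescope_sumr // /Pj /= subr0.
rewrite PhiX in sum2.
apply: nh; exists (psi y - Phi J.+1 y) => //.
rewrite mulrnBl; move: sum1; rewrite sum2 => e.
have -> : Phi J.+1 y *+ q = psi y *+ q - a0 + Pj J.+1 by rewrite -e subrK.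
rewrite -/q; apply/eqP; rewrite -subr_eq0; apply/eqP; rewrite !opprD !opprK !addrA.
rewrite (ACl (1*2*3*5*6*4)) /=.
by repeat rewrite ?subrr ?add0r.
Qed.
End Fwd.

Theorem lemma4p21 (p : nat) (T A : countZmodType) :
  prime p -> is_p_group p T -> is_p_group p A -> reduced A ->
  (Ext_is_Polish T A <-> (ulm1_trivial T \/ bounded A)).
Proof.
move=> pP pT pA rA; split.
- move=> hpol; apply: NNPP => h.
  have nu : ~ ulm1_trivial T by move=> u; apply: h; left.
  have nb : ~ bounded A by move=> b; apply: h; right.
  have [x [ux xn0]] : exists x : T, ulm1 x /\ x <> 0.
    by apply: NNPP => ne; apply: nu => x ux; apply: NNPP => xn; apply: ne; exists x; split.
  have [r xr] := pT x.
  have exP : exists n, x *+ p ^ n == 0 by exists r; apply/eqP.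
  case: (ex_minnP exP) => r0 /eqP xr0 rmin.
  have r0pos : (0 < r0)%N.
    by rewrite lt0n; apply/eqP => e; apply: xn0; rewrite -xr0 e expn0 mulr1n.
  set x0 := x *+ p ^ r0.-1.
  have x0n : x0 != 0.
    apply/negP => /eqP e; have := rmin r0.-1; rewrite -/x0 e eqxx => /(_ isT).
    by rewrite leqNgt prednK // leqnn.
  have x0p : x0 *+ p = 0 by rewrite /x0 -mulrnA -expnSr prednK.
  have hx0 : forall k, exists y, y *+ p ^ k = x0.
    move=> k; have pk : (0 < p ^ k)%N by rewrite expn_gt0 prime_gt0.
    have [y' ey'] := ux (p ^ k)%N pk.
    by exists (y' *+ p ^ r0.-1); rewrite mulrnAC ey'.
  have s0 : is_subgroup (fun t : T => t \in [:: 0]).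
    split; first by rewrite mem_seq1.
    by move=> a b; rewrite !mem_seq1 => /eqP -> /eqP ->; rewrite subrr.
  have [S0 [S0s _ x0S0]] := list_add pP pT x0 s0.
  exact: (fwd_contra pP pT pA rA nb x0n x0p hx0 S0s x0S0 hpol).
- move=> h c hc hcl; exact: (back pP pT pA hc hcl h).
Qed.
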